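(* The generalized DFT $\mathcal{F}:V_\Omega\to V_A$ and the generalized IDFT $\mathcal{F}^{-1}:V_A\to V_\Omega$ (defined below) are mutually inverse linear maps: $\mathcal{F}^{-1}(\mathcal{F}((c_{\underline\omega})_\Omega))=(c_{\underline\omega})_\Omega$ for all $(c_{\underline\omega})_\Omega\in V_\Omega$ and $\mathcal{F}(\mathcal{F}^{-1}((h_{\underline a})_A))=(h_{\underline a})_A$ for all $(h_{\underline a})_A\in V_A$.
   Context: Let $q$ be a prime power, $\mathbb{F}_q$ the field with $q$ elements, and $N\ge 1$ an integer. For a finite set $S$, $V_S$ denotes the $\mathbb{F}_q$-vector space of vectors $(v_s)_{S}=(v_s)_{s\in S}$ with entries in $\mathbb{F}_q$ indexed by $S$. Let $A=A_N=\{0,1,\dots,q-1\}^N$ and $\Omega=\Omega_N=\mathbb{F}_q^N$. For $\underline\omega=(\omega_1,\dots,\omega_N)\in\mathbb{F}_q^N$ and $\underline a=(a_1,\dots,a_N)\in\mathbb{N}_0^N$ write $\underline\omega^{\underline a}=\omega_1^{a_1}\cdots\omega_N^{a_N}$, with the convention $0^0=1$. Generalized DFT: $\mathcal{F}=\mathcal{F}_N:V_\Omega\to V_A$, $(c_{\underline\omega})_\Omega\mapsto(h_{\underline a})_A$ with $h_{\underline a}=\sum_{\underline\omega\in\Omega}c_{\underline\omega}\underline\omega^{\underline a}$. Generalized IDFT: $\mathcal{F}^{-1}=\mathcal{F}_N^{-1}:V_A\to V_\Omega$, $(h_{\underline a})_A\mapsto(c_{\underline\omega})_\Omega$, defined as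 follows. For $\underline\omega\in\Omega$ let $I=I_{\underline\omega}=\{i_1<\dots<i_m\}=\{i:\omega_i\ne0\}\subseteq\{1,\dots,N\}$ (so $m$ is the number of nonzero coordinates). Then $$c_{\underline\omega}=(-1)^m\sum_{l_1,\dots,l_m=1}^{q-1}\Big\{\sum_{J\subseteq\{1,\dots,N\}\setminus I}(-1)^{|J|}h_{\underline i(I,J)}\Big\}\omega_{i_1}^{-l_1}\cdots\omega_{i_m}^{-l_m},$$ where $J$ runs over all subsets of $\{1,\dots,N\}\setminus I$ and $\underline i(I,J)=(b_1,\dots,b_N)\in A$ is given by $b_{i_j}=l_j$ for $1\le j\le m$, $b_i=q-1$ for $i\in J$, and $b_i=0$ for $i\notin I\cup J$. (For $m=0$ the outer sum has the single empty term.) *)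

(* Defs.v *)
From HB Require Import structures.
From mathcomp Require Import all_boot all_order all_algebra all_field.
Set Implicit Arguments. Unset Strict Implicit. Unset Printing Implicit Defensive.
Import GRing.Theory.
Local Open Scope ring_scope.

Notation Omega_ F N := {ffun 'I_N -> F}.
Notation Aidx_ F N := {ffun 'I_N -> 'I_#|F|}.
Notation VOmega F N := {ffun Omega_ F N -> F}.
Notation VA F N := {ffun Aidx_ F N -> F}.

Section GDFT.
Variables (F : finFieldType) (N : nat).
Local Notation Omega := (Omega_ F N).
Local Notation Aidx := (Aidx_ F N).
Local Notation VOmega := (VOmega F N).
Local Notation VA := (VA F N).

(* omega^a = prod_i omega_i^(a_i), with 0^0 = 1 (expr0) *)
Definition mpow (w : Omega) (a : Aidx) : F := \prod_(i < N) (w i) ^+ (a i).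

Definition DFT (c : VOmega) : VA :=
  [ffun a : Aidx => \sum_(w : Omega) c w * mpow w a].

Lemma qm1_lt : (#|F|.-1 < #|F|)%N.
Proof. by rewrite ltn_predL; apply/card_gt0P; exists 0. Qed.

Definition qm1 : 'I_#|F| := Ordinal qm1_lt.

Definition supp (w : Omega) : {set 'I_N} := [set i | w i != 0].

Definition zq : 'I_#|F| := Ordinal (leq_ltn_trans (leq0n _) qm1_lt).

Definition iIJ (I J : {set 'I_N}) (l : Aidx) : Aidx :=
  [ffun i => if i \in I then l i else if i \in J then qm1 else zq].

(* The tuple (l_1,...,l_m) in {1,...,q-1}^m indexed by I = {i_1<...<i_m}
   is encoded as l : Aidx with l_{i_j} = l i_j, l i <> 0 on I and l i = 0 off I. *)
Definition admissible (I : {set 'I_N}) (l : Aidx) : bool :=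
  [forall i, (i \in I) == (l i != 0%N :> nat)].

Definition IDFT (h : VA) : VOmega :=
  [ffun w : Omega =>
     let I := supp w in
     (-1) ^+ #|I| *
     \sum_(l : Aidx | admissible I l)
        (\sum_(J : {set 'I_N} | J \subset ~: I) (-1) ^+ #|J| * h (iIJ I J l))
        * \prod_(i in I) (w i) ^- (l i)].

End GDFT.

(* Main.v *)
Require Import Defs.
From HB Require Import structures.
From mathcomp Require Import all_boot all_order all_algebra all_field.
From mathcomp Require Import all_fingroup all_solvable ring.
Set Implicit Arguments. Unset Strict Implicit. Unset Printing Implicit Defensive.
Import GRing.Theory.
Local Open Scope ring_scope.

Lemma swap_sums (R : comNzRingType) (L Jt V : finType) (PL : pred L) (PJ : pred Jt)
  (s : R) (sJ : Jt -> R) (c : V -> R) (m : V -> L -> Jt -> R) (P : L -> R) :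
  s * \sum_(l | PL l) (\sum_(J | PJ J) sJ J * \sum_v c v * m v l J) * P l
  = \sum_v c v * (s * \sum_(l | PL l) (\sum_(J | PJ J) sJ J * m v l J) * P l).
Proof.
transitivity (\sum_(l | PL l) \sum_(J | PJ J) \sum_v s * sJ J * c v * m v l J * P l).
  rewrite mulr_sumr; apply: eq_bigr => l _.
  rewrite big_distrl /= mulr_sumr; apply: eq_bigr => J _.
  rewrite big_distrr /= big_distrl /= mulr_sumr; apply: eq_bigr => v _; ring.
rewrite (eq_bigr (fun l => \sum_v \sum_(J | PJ J) s * sJ J * c v * m v l J * P l)); last first.
  by move=> l _; rewrite exchange_big.
rewrite exchange_big; apply: eq_bigr => v _.
rewrite mulr_sumr mulr_sumr; apply: eq_bigr => l _.
rewrite big_distrl /= mulr_sumr mulr_sumr; apply: eq_bigr => J _; ring.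
Qed.

Lemma subset_sum (T : finType) (R : comNzRingType) (A : {set T}) (f : T -> R) :
  \sum_(J : {set T} | J \subset A) \prod_(i in J) f i = \prod_(i in A) (1 + f i).
Proof.
transitivity (\prod_(i in A) \sum_(b : bool) (if b then f i else 1)); last first.
  by apply: eq_bigr => i _; rewrite big_bool /= addrC.
rewrite (big_distr_big_dep false).
rewrite (reindex_onto (fun J : {set T} => [ffun i => i \in J]) (fun g => [set i | g i])) /=; last first.
  by move=> g _; apply/ffunP => i; rewrite !ffunE inE.
apply: eq_big => [J | J sJA].
  have -> : [set i | [ffun i0 => i0 \in J] i] == J.
    by apply/eqP/setP => i; rewrite inE ffunE.
  rewrite andbT; apply/subsetP/familyP => [H i | H i iJ].
    rewrite ffunE; case: ifP => iA /=; first by rewrite inE.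
    by rewrite inE; apply/eqP/negbTE; apply: contraFN iA; apply: H.
  by move: (H i); rewrite ffunE iJ; case: (i \in A) => //= /eqP.
rewrite [RHS](big_setID J) /= (setIidPr sJA).
rewrite [X in _ * X]big1 ?mulr1; last first.
  by move=> i; rewrite inE => /andP [iJ _]; rewrite ffunE (negbTE iJ).
by apply: eq_bigr => i iJ; rewrite ffunE iJ.
Qed.

Lemma card_natr0 (F : finFieldType) : (#|F|%:R : F) = 0.
Proof.
have := @expg_cardG F [set: F]%G (GRing.one F) (in_setT _).
by rewrite cardsT FinRing.zmodXgE FinRing.zmod1gE.
Qed.

Lemma geom_sum (F : finFieldType) (x : F) :
  \sum_(j : 'I_#|F| | j != 0%N :> nat) x ^+ j = if x == 1 then -1 else 0.
Proof.
have E : \sum_(j : 'I_#|F| | j != 0%N :> nat) x ^+ j = \sum_(j < #|F|) x ^+ j - 1.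
  rewrite [X in _ = X - 1](bigD1 (zq F)) //= expr0 addrC addrK.
  by apply: eq_bigl => j; congr (~~ _); apply/eqP/eqP => [/(congr1 val)|/val_inj].
rewrite E; case: eqP => [->|/eqP x1].
  rewrite (eq_bigr (fun _ => 1)) => [|j _]; last by rewrite expr1n.
  by rewrite sumr_const card_ord card_natr0 sub0r.
have x1' : x - 1 != 0 by rewrite subr_eq0.
have : (x - 1) * \sum_(j < #|F|) x ^+ j = (x - 1) * 1 by rewrite -subrX1 expf_card mulr1.
by move/(mulfI x1') ->; rewrite subrr.
Qed.

Section K.
Variables (F : finFieldType) (N : nat).

Lemma q_gt1 : (1 < #|F|)%N.
Proof. exact: card_finNzRing_gt1. Qed.

Lemma powqm1 (x : F) : 1 - x ^+ (qm1 F) = (x == 0)%:R.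
Proof.
rewrite /=; have [->|xnz] := eqVneq x 0.
  by rewrite expr0n /=; have := q_gt1; case: #|F| => [|[|n]] //= _; rewrite subr0.
have e : #|F| = (#|F|.-1).+1 by rewrite prednK // ltnW // q_gt1.
have : x * x ^+ #|F|.-1 = x * 1 by rewrite -exprS -e expf_card mulr1.
by move/(mulfI xnz) ->; rewrite subrr.
Qed.

Lemma mpow_iIJ (v : Omega_ F N) (I J : {set 'I_N}) (l : Aidx_ F N) :
  J \subset ~: I ->
  mpow v (iIJ I J l) = \prod_(i in I) v i ^+ l i * \prod_(i in J) v i ^+ (qm1 F).
Proof.
move=> sJI; rewrite /mpow (bigID (mem I)) /=; congr (_ * _).
  by apply: eq_bigr => i iI; rewrite ffunE iI.
rewrite [RHS]big_mkcond [LHS]big_mkcond /=; apply: eq_bigr => i _.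
rewrite ffunE; case: (boolP (i \in I)) => iI /=; case: (boolP (i \in J)) => iJ /=.
- by move: (subsetP sJI i iJ); rewrite in_setC iI.
- by [].
- by [].
- by rewrite expr0.
Qed.

Lemma sumJ (v : Omega_ F N) (I : {set 'I_N}) (l : Aidx_ F N) :
  \sum_(J : {set 'I_N} | J \subset ~: I) (-1) ^+ #|J| * mpow v (iIJ I J l)
  = \prod_(i in I) v i ^+ l i * \prod_(i in ~: I) (v i == 0)%:R.
Proof.
rewrite (eq_bigr (fun J : {set 'I_N} => \prod_(i in I) v i ^+ l i * \prod_(i in J) - v i ^+ (qm1 F))); last first.
  by move=> J sJ; rewrite (mpow_iIJ _ _ sJ) mulrCA prodrN.
rewrite -mulr_sumr; congr (_ * _).
rewrite subset_sum; apply: eq_bigr => i _; by rewrite -powqm1.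
Qed.

Lemma sum_adm (I : {set 'I_N}) (G : 'I_N -> 'I_#|F| -> F) :
  \sum_(l : Aidx_ F N | admissible I l) \prod_(i in I) G i (l i)
  = \prod_(i in I) \sum_(j : 'I_#|F| | j != 0%N :> nat) G i j.
Proof.
rewrite (big_distr_big_dep (zq F)); apply: eq_bigl => l.
apply/forallP/familyP => H i; move: (H i);
  (have -> : (i \in in_mem^~ (mem I)) = (i \in I) by []);
  case: (i \in I); rewrite /= ?inE ?unfold_in -?val_eqE /=; case: (nat_of_ord (l i)). all: by [].
Qed.

Lemma kernel (w v : Omega_ F N) :
  (-1) ^+ #|supp w| * \sum_(l : Aidx_ F N | admissible (supp w) l)
     (\sum_(J : {set 'I_N} | J \subset ~: supp w) (-1) ^+ #|J| * mpow v (iIJ (supp w) J l))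
     * \prod_(i in supp w) (w i) ^- (l i)
  = (v == w)%:R.
Proof.
set I := supp w.
rewrite (eq_bigr (fun l : Aidx_ F N => \prod_(i in ~: I) (v i == 0)%:R *
           \prod_(i in I) (v i / w i) ^+ l i)); last first.
  move=> l _; rewrite sumJ mulrAC mulrC; congr (_ * _).
  by rewrite -big_split /=; apply: eq_bigr => i _; rewrite expr_div_n.
rewrite -mulr_sumr (sum_adm I (fun i j => (v i / w i) ^+ j)).
rewrite [X in _ * (_ * X)](eq_bigr (fun i => - (v i == w i)%:R)); last first.
  move=> i iI; rewrite geom_sum.
  have wnz : w i != 0 by move: iI; rewrite inE.
  have -> : (v i / w i == 1) = (v i == w i).
    by rewrite -(inj_eq (mulIf wnz)) mulfVK // mul1r.
  by case: (v i == w i); rewrite ?oppr0.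
have ss : (-1) ^+ #|I| * (-1) ^+ #|I| = 1 :> F by rewrite -exprD addnn -mul2n exprM sqrrN !expr1n.
rewrite prodrN mulrCA (mulrA ((-1) ^+ #|I|)) ss mul1r.
rewrite (eq_bigr (fun i => (v i == w i)%:R)); last first.
  by move=> i; rewrite !inE negbK => /eqP ->.
rewrite mulrC.
have -> : \prod_(i in I) (v i == w i)%:R * \prod_(i in ~: I) (v i == w i)%:R
          = \prod_i (v i == w i)%:R :> F.
  rewrite [RHS](bigID (mem I)) /=; congr (_ * _).
  by apply: eq_bigl => i; rewrite in_setC.
have [->|nvw] := eqVneq v w.
  by rewrite big1 // => i _; rewrite eqxx.
have [i Hi] : exists i, v i != w i.
  apply/existsP; apply: contraR nvw => /existsPn H.
  by apply/eqP/ffunP => i; apply/eqP; exact: negbNE (H i).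
by rewrite (bigD1 i) //= (negbTE Hi) mul0r.
Qed.
End K.

Theorem mainTheorem1 (F : finFieldType) (N : nat) (hN : (1 <= N)%N) :
  (* F and F^{-1} are F_q-linear (vector operations written pointwise) *)
  (forall (k : F) (c d : VOmega F N),
      DFT [ffun w => k * c w + d w] = [ffun a => k * DFT c a + DFT d a]) /\
  (forall (k : F) (h g : VA F N),
      IDFT [ffun a => k * h a + g a] = [ffun w => k * IDFT h w + IDFT g w]) /\
  (* they are mutually inverse *)
  (forall c : VOmega F N, IDFT (DFT c) = c) /\
  (forall h : VA F N, DFT (IDFT h) = h).
Proof.
have inv1 : forall c : VOmega F N, IDFT (DFT c) = c.
  move=> c; apply/ffunP => w; rewrite ffunE /=.
  under eq_bigr => l _ do (under eq_bigr => J _ do rewrite ffunE).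
  rewrite swap_sums.
  under eq_bigr => v _ do rewrite kernel.
  rewrite (bigD1 w) //= eqxx mulr1 big1 ?addr0 // => v /negbTE ->.
  by rewrite mulr0.
split.
  move=> k c d; apply/ffunP => a; rewrite !ffunE.
  under eq_bigr => w _ do rewrite ffunE.
  rewrite mulr_sumr -big_split; apply: eq_bigr => w _; by rewrite /= mulrDl mulrA.
split.
  move=> k h g; apply/ffunP => w; rewrite !ffunE /=.
  under eq_bigr => l _ do (under eq_bigr => J _ do rewrite ffunE).
  rewrite mulrCA -mulrDr; congr (_ * _).
  rewrite mulr_sumr -big_split; apply: eq_bigr => l _.
  rewrite /= mulrA -mulrDl; congr (_ * _).
  rewrite mulr_sumr -big_split; apply: eq_bigr => J _; by rewrite /= mulrDr mulrCA.
split; first exact: inv1.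
move=> h.
have injD : injective (@DFT F N).
  by move=> c d Hcd; rewrite -(inv1 c) -(inv1 d) Hcd.
have cardE : (#|VA F N| <= #|VOmega F N|)%N.
  by rewrite !card_ffun !card_ord.
have /codomP [c ->] := inj_card_onto injD cardE h.
by rewrite inv1.
Qed.
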